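(* For every $i\ge1$, in $\mathcal W_m(q,\mu)$ with $m\ge 2i+1$: $$c^{(2i)}\,\sigma_{2i}\,c^{(2i)}=\eta^{-1}\mu^{-1}c^{(2i)},\qquad c^{(2i)}\,\kappa_{2i}\,c^{(2i)}=\eta^{-1}c^{(2i)}.$$
   Context: Fix $q\in\mathbb C\setminus\{0,\pm1\}$, $\mu\in\mathbb C\setminus\{0,q,-q^{-1}\}$. Braid group $\mathcal B_n$: generators $\sigma_1,\dots,\sigma_{n-1}$, relations $\sigma_i\sigma_{i+1}\sigma_i=\sigma_{i+1}\sigma_i\sigma_{i+1}$, $\sigma_i\sigma_j=\sigma_j\sigma_i$ ($|i-j|>1$). With $\kappa_i:=\frac{(q-\sigma_i)(q^{-1}+\sigma_i)}{\mu(q-q^{-1})}$, the BMW algebra $\mathcal W_n(q,\mu)$ is $\mathbb C\mathcal B_n$ modulo $\sigma_i\kappa_i=\kappa_i\sigma_i=\mu\kappa_i$, $\kappa_i\sigma_{i+1}^{\epsilon}\kappa_i=\mu^{-\epsilon}\kappa_i$ ($\epsilon=\pm1$). $\eta:=\frac{(q-\mu)(q^{-1}+\mu)}{\mu(q-q^{-1})}$. Elements of $\mathcal W_n$ are viewed in $\mathcal W_m$, $m>n$, via $\sigma_i\mapsto\sigma_i$; for $\alpha\in\mathcal W_n$, $\alpha^{\uparrow k}\in\mathcal W_{n+k}$ is its image under $\sigma_i\mapsto\sigma_{i+k}$. Contractors: $c^{(2)}:=\eta^{-1}\kappa_1$, $c^{(2i+2)}:=c^{(2i)\uparrow1}\kappa_1\kappa_{2i+1}c^{(2i)\uparrow1}$.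 *)

(* Defs.v *)
From HB Require Import structures.
From mathcomp Require Import all_boot all_order all_algebra.
Set Implicit Arguments. Unset Strict Implicit. Unset Printing Implicit Defensive.
Import GRing.Theory.
Local Open Scope ring_scope.

(* The BMW algebra W_m(q,mu) is the quotient of the group algebra of the
   braid group B_m by the BMW relations.  We work with its universal property:
   an identity holds in W_m iff it holds for every F-algebra A and every family
   s_1..s_{m-1} of invertible elements of A (inverses t_i) satisfying the braid
   and BMW relations.  Sequences are 1-indexed: s i = sigma_i. *)

Section BMW.
Variables (F : fieldType) (A : algType F) (q mu : F).

Definition kappa (s : nat -> A) (i : nat) : A :=
  (mu * (q - q^-1))^-1 *: ((q%:A - s i) * (q^-1%:A + s i)).

Definition bmw_eta : F := (q - mu) * (q^-1 + mu) / (mu * (q - q^-1)).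

Definition shift1 (s : nat -> A) : nat -> A := fun k => s k.+1.

(* contractor s j = c^{(2j)}, for j >= 1 (value at j = 0 is irrelevant). *)
Fixpoint contractor (s : nat -> A) (j : nat) {struct j} : A :=
  match j with
  | 0 => 1
  | 1 => bmw_eta^-1 *: kappa s 1
  | (j'.+1) as jj =>
      contractor (shift1 s) j' * kappa s 1 * kappa s (2 * j').+1
        * contractor (shift1 s) j'
  end.

Definition BMW_rels (m : nat) (s t : nat -> A) : Prop :=
  [/\ forall i, (1 <= i <= m.-1)%N -> s i * t i = 1 /\ t i * s i = 1,
      forall i, (1 <= i)%N -> (i.+1 <= m.-1)%N ->
        s i * s i.+1 * s i = s i.+1 * s i * s i.+1,
      forall i j, (1 <= i <= m.-1)%N -> (1 <= j <= m.-1)%N -> (i.+1 < j)%N ->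
        s i * s j = s j * s i,
      forall i, (1 <= i <= m.-1)%N ->
        s i * kappa s i = mu *: kappa s i /\ kappa s i * s i = mu *: kappa s i
    & forall i, (1 <= i)%N -> (i.+1 <= m.-1)%N ->
        kappa s i * s i.+1 * kappa s i = mu^-1 *: kappa s i /\
        kappa s i * t i.+1 * kappa s i = mu *: kappa s i].

End BMW.

(* Main.v *)
Require Import Defs.
From HB Require Import structures.
From mathcomp Require Import all_boot all_order all_algebra.
From mathcomp Require Import ring zify.
Import GRing.Theory.
Local Open Scope ring_scope.

Section Proof.
Variables (F : fieldType) (A : algType F) (q mu : F).
Hypotheses (hq0 : q != 0) (hq1 : q != 1) (hqm1 : q != -1)
  (hmu0 : mu != 0) (hmuq : mu != q) (hmuq' : mu != - q^-1).
Local Notation k := (kappa q mu).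
Local Notation eta := (bmw_eta q mu).
Local Notation c := (contractor q mu).

Lemma qsq_neq0 : q * q - 1 != 0.
Proof.
have -> : q * q - 1 = (q - 1) * (q + 1) by ring.
by rewrite mulf_neq0 // ?subr_eq0 ?addr_eq0.
Qed.

Lemma qq_neq0 : q - q^-1 != 0.
Proof.
have -> : q - q^-1 = (q * q - 1) / q by field.
by rewrite mulf_neq0 ?invr_neq0 ?qsq_neq0.
Qed.

Lemma eta_neq0 : eta != 0.
Proof.
rewrite /bmw_eta mulf_neq0 ?invr_neq0 ?mulf_neq0 ?qq_neq0 //.
  by rewrite subr_eq0 eq_sym.
by rewrite addrC addr_eq0.
Qed.

Lemma comm_scale (x y : A) (a : F) : GRing.comm x y -> GRing.comm x (a *: y).
Proof. by rewrite /GRing.comm => h; rewrite -scalerAr -scalerAl h. Qed.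

Lemma comm_alg (x : A) (a : F) : GRing.comm x a%:A.
Proof. by apply: comm_scale; exact: commr1. Qed.

Lemma comm_kappa (s : nat -> A) x i : GRing.comm x (s i) -> GRing.comm x (k s i).
Proof.
move=> h; rewrite /kappa; apply: comm_scale; apply: commrM.
  by apply: commrB => //; apply: comm_alg.
by apply: commrD => //; apply: comm_alg.
Qed.

Lemma K2 (s : nat -> A) i : s i * k s i = mu *: k s i ->
  k s i * k s i = eta *: k s i.
Proof.
move=> h; rewrite {1}/kappa -scalerAl -mulrA.
have -> : (q^-1%:A + s i) * k s i = (q^-1 + mu) *: k s i.
  by rewrite mulrDl mulr_algl h scalerDl.
rewrite -scalerAr mulrBl mulr_algl h -scalerBl !scalerA.
congr (_ *: _); rewrite /bmw_eta; field.
by rewrite ?mulf_neq0 ?qsq_neq0 ?hq0 ?hmu0.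
Qed.

Lemma tK {x y z : A} {a : F} : y * x = 1 -> x * z = a *: z -> a != 0 ->
  y * z = a^-1 *: z.
Proof.
move=> hyx hxz ha.
rewrite -[LHS]scale1r -(mulVf ha) -scalerA scalerAr -hxz mulrA hyx mul1r //.
Qed.

Lemma skein (s t : nat -> A) j : t j * s j = 1 ->
  s j * k s j = mu *: k s j -> s j - t j = (q - q^-1) *: (1 - k s j).
Proof.
move=> hts hsk.
have htk := tK hts hsk hmu0.
have hP : t j * ((q%:A - s j) * (q^-1%:A + s j)) = t j + (q - q^-1)%:A - s j.
  rewrite mulrA mulrBr mulr_algr hts mulrDr mulr_algr.
  rewrite scalerBr scalerA mulVf // scale1r mulrBl -scalerAl hts mul1r scalerBl.
  by rewrite addrA; congr (_ - _); rewrite addrAC -addrA.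
have E : (mu * (q - q^-1))^-1 *: (t j + (q - q^-1)%:A - s j) = mu^-1 *: k s j.
  by rewrite -htk /kappa -scalerAr hP.
have E2 : t j + (q - q^-1)%:A - s j = (q - q^-1) *: k s j.
  have hn : mu * (q - q^-1) != 0 by rewrite mulf_neq0 ?qq_neq0.
  have := congr1 (fun v => (mu * (q - q^-1)) *: v) E => /=.
  rewrite !scalerA mulfV // scale1r => ->; congr (_ *: _); field.
  by rewrite hq0 qsq_neq0 hmu0.
rewrite scalerBr -E2 opprB opprD addrCA; congr (_ + _).
by rewrite addrCA subrr addr0.
Qed.

Lemma KKK (s t : nat -> A) i : t i.+1 * s i.+1 = 1 ->
  s i * k s i = mu *: k s i -> s i.+1 * k s i.+1 = mu *: k s i.+1 ->
  k s i * s i.+1 * k s i = mu^-1 *: k s i ->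
  k s i * t i.+1 * k s i = mu *: k s i ->
  k s i * k s i.+1 * k s i = k s i.
Proof.
move=> hts hsk hsk' h1 h2.
have E : k s i * (s i.+1 - t i.+1) * k s i = (mu^-1 - mu) *: k s i.
  by rewrite mulrBr mulrBl h1 h2 scalerBl.
have hK := @K2 s i hsk.
move: E; rewrite skein //.
set K := k s i in hK h1 h2 *; set K' := k s i.+1 in hsk' *.
clearbody K K'.
rewrite -scalerAr -scalerAl mulrBr mulr1 mulrBl hK.
rewrite scalerBr scalerA => /eqP; rewrite subr_eq => /eqP E.
apply: (scalerI qq_neq0).
have -> : (q - q^-1) *: (K * K' * K)
   = ((q - q^-1) * eta - (mu^-1 - mu)) *: K.
  by rewrite [RHS]scalerBl E addrAC subrr add0r.
congr (_ *: _); rewrite /bmw_eta; field.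
by rewrite hmu0 hq0 qsq_neq0.
Qed.

Lemma rw2 {x y z w : A} : y * z = w -> x * y * z = x * w.
Proof. by move=> <-; rewrite mulrA. Qed.

Lemma rw3 {x y z u w : A} : y * z * u = w -> x * y * z * u = x * w.
Proof. by move=> <-; rewrite !mulrA. Qed.

Lemma step_d (C K1 Kj D : A) : C * C = C -> D * C = C ->
  K1 * C * K1 = eta^-1 *: (K1 * D) -> K1 * Kj = Kj * K1 ->
  D * Kj = Kj * D -> Kj * Kj = eta *: Kj ->
  (C * K1 * Kj * C) * (C * K1 * Kj * C) = C * K1 * Kj * C.
Proof.
move=> CC DC Lm K1Kj DKj KjKj.
rewrite ?mulrA (rw2 CC) (rw2 (x:=C) K1Kj) ?mulrA (rw3 Lm).
rewrite -scalerAr -!scalerAl ?mulrA.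
rewrite (rw2 (esym K1Kj)) ?mulrA (rw2 (esym DKj)) ?mulrA (rw2 KjKj).
rewrite -scalerAr -!scalerAl scalerA mulVf ?eta_neq0 // scale1r ?mulrA.
by rewrite (rw2 DKj) ?mulrA (rw2 DC) ?mulrA.
Qed.

Lemma step_cb (C K1 Kj D Y : A) (a : F) : C * C = C -> D * C = C ->
  K1 * C * K1 = eta^-1 *: (K1 * D) -> K1 * Kj = Kj * K1 ->
  D * Kj = Kj * D -> C * Y = Y * C -> K1 * Y = Y * K1 -> D * Y = Y * D ->
  Kj * Y * Kj = a *: Kj ->
  (C * K1 * Kj * C) * Y * (C * K1 * Kj * C) = (eta^-1 * a) *: (C * K1 * Kj * C).
Proof.
move=> CC DC Lm K1Kj DKj CY K1Y DY KYK.
rewrite ?mulrA (rw2 CY) ?mulrA (rw2 CC) (rw2 (x:=C) K1Kj) ?mulrA.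
rewrite (rw2 (x:=C*Kj) K1Y) ?mulrA (rw3 Lm).
rewrite -scalerAr -!scalerAl ?mulrA -scalerA; congr (_ *: _).
rewrite (rw2 (x:=C*Kj) (esym K1Y)) ?mulrA (rw2 (x:=C) (esym K1Kj)) ?mulrA.
rewrite (rw2 (esym DY)) ?mulrA (rw2 (esym DKj)) ?mulrA (rw3 KYK).
rewrite -scalerAr -!scalerAl ?mulrA; congr (_ *: _).
by rewrite (rw2 DKj) ?mulrA (rw2 DC) ?mulrA.
Qed.

Lemma step_Lm (E K1 K2 Km : A) : K1 * E = E * K1 -> K1 * Km = Km * K1 ->
  K1 * K2 * K1 = K1 -> E * Km * E = eta^-1 *: E ->
  K1 * (E * K2 * Km * E) * K1 = eta^-1 *: (K1 * E).
Proof.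
move=> K1E K1Km KKK EKE.
rewrite ?mulrA K1E (rw2 (esym K1E)) ?mulrA (rw2 (esym K1Km)) ?mulrA (rw3 KKK).
by rewrite -K1E (rw3 EKE) -scalerAr.
Qed.

Lemma base_abs (K1 K2 S : A) : K1 * K1 = eta *: K1 -> K1 * K2 * K1 = K1 ->
  K1 * S * K1 = mu^-1 *: K1 ->
  [/\ (eta^-1 *: K1) * (eta^-1 *: K1) = eta^-1 *: K1,
      (eta^-1 *: K1) * K2 * (eta^-1 *: K1) = eta^-1 *: (eta^-1 *: K1),
      K1 * (eta^-1 *: K2) * K1 = eta^-1 *: (K1 * 1)
    & (eta^-1 *: K1) * S * (eta^-1 *: K1) = (eta^-1 * mu^-1) *: (eta^-1 *: K1)].
Proof.
move=> KK KKK KSK; split.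
- rewrite -scalerAl -scalerAr KK !scalerA; congr (_ *: _).
  by rewrite -mulrA mulVf ?eta_neq0 // mulr1.
- by rewrite -!scalerAl -scalerAr KKK.
- by rewrite mulr1 -scalerAr -scalerAl KKK.
- rewrite -!scalerAl -scalerAr KSK !scalerA; congr (_ *: _).
  by rewrite mulrAC.
Qed.

Definition good (s : nat -> A) (N : nat) : Prop :=
 [/\ forall i, (1 <= i <= N)%N -> k s i * k s i = eta *: k s i,
     forall i, (1 <= i)%N -> (i.+1 <= N)%N -> k s i * k s i.+1 * k s i = k s i,
     forall i, (1 <= i)%N -> (i.+1 <= N)%N -> k s i * s i.+1 * k s i = mu^-1 *: k s i
   & forall i j, (1 <= i)%N -> (j <= N)%N -> (i.+1 < j)%N -> s i * s j = s j * s i].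

Lemma good_shift s N : good s N -> good (shift1 s) N.-1.
Proof.
case=> g1 g2 g3 g4; split.
- move=> i hi; apply: (g1 i.+1); lia.
- move=> i hi hi'; apply: (g2 i.+1); lia.
- move=> i hi hi'; apply: (g3 i.+1); lia.
- move=> i j hi hj hij; apply: (g4 i.+1 j.+1); lia.
Qed.

Lemma comm_ss s N a b : good s N -> (0 < a)%N -> (0 < b)%N -> (a <= N)%N ->
  (b <= N)%N -> (a.+1 < b)%N || (b.+1 < a)%N -> GRing.comm (s a) (s b).
Proof.
case=> _ _ _ g4 ha hb haN hbN /orP[h|h]; first exact: g4.
by apply/esym/g4.
Qed.

Lemma comm_contr (x : A) i : forall s : nat -> A,
  (forall j, (0 < j < 2 * i)%N -> GRing.comm x (s j)) -> GRing.comm x (c s i).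
Proof.
elim: i => [|i IH] s h; first exact: commr1.
case: i IH h => [|i] IH h.
  by apply: comm_scale; apply: comm_kappa; apply: h.
have e : c s i.+2 = c (shift1 s) i.+1 * k s 1 * k s (2 * i.+1).+1 * c (shift1 s) i.+1 by [].
rewrite e; have hc : GRing.comm x (c (shift1 s) i.+1).
  by apply: IH => j hj; apply: (h j.+1); lia.
apply: commrM => //; apply: commrM; last by apply: comm_kappa; apply: h; lia.
by apply: commrM => //; apply: comm_kappa; apply: h; lia.
Qed.

Lemma iter_shift off (s : nat -> A) l : iter off (@shift1 F A) s l = s (off + l)%N.
Proof. by elim: off s l => [|o IH] s l //=; rewrite /shift1 /= IH addSnnS. Qed.

Lemma comm_c (s : nat -> A) N (x : A) off i b : good s N -> (x = s b \/ x = k s b) ->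
  (0 < b <= N)%N -> ((off + 2 * i).-1 <= N)%N ->
  (b < off)%N || (off + 2 * i < b)%N -> GRing.comm x (c (iter off (@shift1 F A) s) i).
Proof.
move=> gs hx hb hN hr; apply: comm_contr => l hl; rewrite iter_shift.
have hc : GRing.comm (s b) (s (off + l)%N).
  apply: (comm_ss _ _ _ _ gs); lia.
case: hx => ->; first exact: hc.
by apply: commr_sym; apply: comm_kappa; apply: commr_sym.
Qed.

Lemma comm_kk (s : nat -> A) a b : GRing.comm (s a) (s b) -> GRing.comm (k s a) (k s b).
Proof.
move=> h; apply: comm_kappa; apply: commr_sym; apply: comm_kappa.
exact: commr_sym.
Qed.

Lemma comm_ks (s : nat -> A) a b : GRing.comm (s a) (s b) -> GRing.comm (k s a) (s b).
Proof. by move=> h; apply: commr_sym; apply: comm_kappa; apply: commr_sym. Qed.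

Lemma main n : forall (s : nat -> A) N, good s N -> (2 * n.+1 <= N)%N ->
 [/\ c s n.+1 * c s n.+1 = c s n.+1,
     c (shift1 s) n * c s n.+1 = c s n.+1,
     c s n.+1 * k s (2 * n.+1) * c s n.+1 = eta^-1 *: c s n.+1,
     k s 1 * c (shift1 s) n.+1 * k s 1 = eta^-1 *: (k s 1 * c (shift1 (shift1 s)) n)
   & c s n.+1 * s (2 * n.+1)%N * c s n.+1 = (eta^-1 * mu^-1) *: c s n.+1].
Proof.
elim: n => [|n IH] s N gs hN.
  case: (gs) => g1 g2 g3 g4.
  have [b1 b2 b3 b4] := base_abs _ _ _ (g1 1 ltac:(lia)) (g2 1 isT ltac:(lia))
                                 (g3 1 isT ltac:(lia)).
  by split; [exact: b1 | rewrite mul1r | exact: b2 | exact: b3 | exact: b4].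
case: (gs) => g1 g2 g3 g4.
have gs1 := good_shift _ _ gs; have gs2 := good_shift _ _ gs1.
have [d1 ab1 _ _ _] := IH (shift1 s) N.-1 gs1 ltac:(lia).
have [_ _ _ lm0 _] := IH s N gs ltac:(lia).
have [_ _ c2 _ _] := IH (shift1 (shift1 s)) N.-1.-1 gs2 ltac:(lia).
have ej : (2 * n.+2 = (2 * n.+1).+2)%N by lia.
rewrite ej.
set j := (2 * n.+1).+1.
have e : c s n.+2 = c (shift1 s) n.+1 * k s 1 * k s j * c (shift1 s) n.+1 by [].
have e' : c (shift1 s) n.+2 = c (shift1 (shift1 s)) n.+1 * k s 2 * k s j.+1
   * c (shift1 (shift1 s)) n.+1 by [].
have s1j : GRing.comm (s 1) (s j) by apply: (comm_ss _ _ _ _ gs); rewrite /j; lia.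
have s1j1 : GRing.comm (s 1) (s j.+1) by apply: (comm_ss _ _ _ _ gs); rewrite /j; lia.
have K1Kj := comm_kk _ _ _ s1j.
have K1Kj1 := comm_kk _ _ _ s1j1.
have K1S : GRing.comm (k s 1) (s j.+1) := comm_ks _ _ _ s1j1.
have DKj : GRing.comm (k s j) (c (iter 2 (@shift1 F A) s) n).
  by apply: (comm_c _ _ _ _ _ (j) gs); [right | rewrite /j; lia..].
have DKj1 : GRing.comm (k s j.+1) (c (iter 2 (@shift1 F A) s) n).
  by apply: (comm_c _ _ _ _ _ (j.+1) gs); [right | rewrite /j; lia..].
have DS : GRing.comm (s j.+1) (c (iter 2 (@shift1 F A) s) n).
  by apply: (comm_c _ _ _ _ _ (j.+1) gs); [left | rewrite /j; lia..].
have DK1 : GRing.comm (k s 1) (c (iter 2 (@shift1 F A) s) n).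
  by apply: (comm_c _ _ _ _ _ (1) gs); [right | rewrite /j; lia..].
have CKj1 : GRing.comm (k s j.+1) (c (iter 1 (@shift1 F A) s) n.+1).
  by apply: (comm_c _ _ _ _ _ (j.+1) gs); [right | rewrite /j; lia..].
have CS : GRing.comm (s j.+1) (c (iter 1 (@shift1 F A) s) n.+1).
  by apply: (comm_c _ _ _ _ _ (j.+1) gs); [left | rewrite /j; lia..].
have EK1 : GRing.comm (k s 1) (c (iter 2 (@shift1 F A) s) n.+1).
  by apply: (comm_c _ _ _ _ _ (1) gs); [right | rewrite /j; lia..].
have KjKj : k s j * k s j = eta *: k s j by apply: g1; rewrite /j; lia.
have KKKj : k s j * k s j.+1 * k s j = 1 *: k s j.
  by rewrite scale1r; apply: g2; rewrite /j; lia.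
have KSKj : k s j * s j.+1 * k s j = mu^-1 *: k s j.
  by apply: g3; rewrite /j; lia.
split.
- rewrite e; apply: (step_d _ _ _ (c (shift1 (shift1 s)) n)) => //; exact: (esym DKj).
- by rewrite e !mulrA d1.
- rewrite e -[eta^-1]mulr1; apply: (step_cb _ _ _ (c (shift1 (shift1 s)) n)) => //; by apply: esym.
- rewrite e'; apply: step_Lm => //; apply: g2; lia.
- rewrite ?ej e; apply: (step_cb _ _ _ (c (shift1 (shift1 s)) n)) => //; by apply: esym.
Qed.

Lemma good_of_rels m (s t : nat -> A) : BMW_rels q mu m s t -> good s m.-1.
Proof.
case=> hinv hbr hcomm hsk hkk; split.
- move=> i hi; apply: K2; exact: (hsk i hi).1.
- move=> i hi hi'.
  have h1 := hinv i.+1 ltac:(lia).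
  have h2 := hsk i ltac:(lia).
  have h3 := hsk i.+1 ltac:(lia).
  have h4 := hkk i hi hi'.
  exact: (KKK s t i h1.2 h2.1 h3.1 h4.1 h4.2).
- by move=> i hi hi'; exact: (hkk i hi hi').1.
- by move=> i j hi hj hij; apply: hcomm; lia.
Qed.

End Proof.

Theorem lemmaA2 (F : fieldType) (q mu : F)
  (hq0 : q != 0) (hq1 : q != 1) (hqm1 : q != -1)
  (hmu0 : mu != 0) (hmuq : mu != q) (hmuq' : mu != - q^-1)
  (m : nat) (A : algType F) (s t : nat -> A)
  (hrel : BMW_rels q mu m s t)
  (i : nat) (hi : (1 <= i)%N) (hm : (2 * i + 1 <= m)%N) :
  contractor q mu s i * s (2 * i)%N * contractor q mu s i
    = ((bmw_eta q mu)^-1 * mu^-1) *: contractor q mu s i /\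
  contractor q mu s i * kappa q mu s (2 * i)%N * contractor q mu s i
    = (bmw_eta q mu)^-1 *: contractor q mu s i.
Proof.
have gs := @good_of_rels F A q mu hq0 hq1 hqm1 hmu0 hmuq hmuq' m s t hrel.
case: i hi hm => [//|n] _ hm.
have [_ _ hc _ hb] :=
  @main F A q mu hq0 hq1 hqm1 hmu0 hmuq hmuq' n s m.-1 gs ltac:(lia).
split; [exact hb | exact hc].
Qed.
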